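(* Let $S$ be a string of length $n$ over a totally ordered alphabet, let $i\in[1,n]$ and $j=\mathrm{nss}[i]\ne n+1$. If $\mathrm{llce}(i,j)> j-i$, then $\mathrm{llce}(i-(j-i),i)=\mathrm{llce}(i,j)-(j-i)$ and $\mathrm{nss}[i-(j-i)]=i$.
   Context: For $i\in[1,n+1]$, $S_i=S[i..n]$ ($S_{n+1}$ empty); $\prec$ is the induced lexicographical order. $\mathrm{nss}[i]=\min\{j \mid j=n+1 \text{ or } (j\in(i,n] \text{ and } S_i\succ S_j)\}$ for $i\in[1,n]$. $\mathrm{llce}(a,b)$ is the length of the longest common suffix of the prefixes $S[1..a]$ and $S[1..b]$. *)

(* Defs.v *)
From mathcomp Require Import all_boot all_order.
Set Implicit Arguments. Unset Strict Implicit. Unset Printing Implicit Defensive.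
Import Order.TTheory.
Local Open Scope order_scope.

(* Strings are sequences S : seq T over a totally ordered alphabet T.
   Positions are 1-based: S[p] is the p-th letter, p in [1, size S]. *)
Section Strings.
Context {d : Order.disp_t} {T : orderType d}.

Definition suf (S : seq T) (i : nat) : seqlexi T := drop i.-1 S.

(* S_i \succ S_j in the (library) lexicographic order on sequences,
   where a proper prefix is smaller. *)
Definition suf_gt (S : seq T) (i j : nat) : bool := suf S j < suf S i.

(* nss[i] = min { j | j = n+1 or (j in (i, n] and S_i \succ S_j) }:
   the first j = i+1, i+2, ..., n with S_i \succ S_j, or n+1 if none. *)
Definition nss (S : seq T) (i : nat) : nat :=
  i.+1 + find (fun k => suf_gt S i (i.+1 + k)) (iota 0 (size S - i)).

Fixpoint lcp (s t : seq T) : nat :=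
  match s, t with
  | x :: s', y :: t' => if x == y then (lcp s' t').+1 else 0
  | _, _ => 0
  end.

(* llce(a,b) = length of the longest common suffix of S[1..a] and S[1..b] *)
Definition llce (S : seq T) (a b : nat) : nat :=
  lcp (rev (take a S)) (rev (take b S)).

End Strings.

(* Main.v *)
Require Import Defs.
From mathcomp Require Import all_boot all_order zify.
Set Implicit Arguments. Unset Strict Implicit. Unset Printing Implicit Defensive.
Import Order.TTheory.

Section H.
Context {disp : Order.disp_t} {T : orderType disp}.

Lemma ltxi_catl (u s t : seq T) :
  ((u ++ s : seqlexi T) < (u ++ t : seqlexi T))%O = ((s : seqlexi T) < (t : seqlexi T))%O.
Proof. by elim: u => //= x u IH; rewrite eqhead_ltxiE. Qed.

Lemma lexi_catneq (a b X Y : seq T) : size a = size b -> a != b ->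
  ((a ++ X : seqlexi T) <= (b ++ Y : seqlexi T))%O = ((a : seqlexi T) <= (b : seqlexi T))%O.
Proof.
elim: a b => [|x a IH] [|y b] // [Hs] Hne; rewrite !cat_cons.
have [Exy|Hxy] := eqVneq x y.
  subst y.
  by rewrite !eqhead_lexiE IH //; apply/negP => /eqP E; move/negP: Hne; apply; rewrite E eqxx.
rewrite (@lexi_cons _ _ T x (a++X) y (b++Y)) (@lexi_cons _ _ T x a y b).
by case: (ltgtP x y) Hxy => // ->; rewrite eqxx.
Qed.

Lemma lcp_le (s t : seq T) : lcp s t <= size s.
Proof. by elim: s t => [|x s IH] [|y t] //=; case: eqP => // _; rewrite ltnS. Qed.

Lemma lcp_eq (x0 : T) (s t : seq T) k : k < lcp s t -> nth x0 s k = nth x0 t k.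
Proof.
elim: s t k => [|x s IH] [|y t] k //=; case: eqP => // <-.
by case: k => //= k; rewrite ltnS; apply: IH.
Qed.

Lemma lcp_stop (x0 : T) (s t : seq T) : lcp s t < size s -> lcp s t < size t ->
  nth x0 s (lcp s t) != nth x0 t (lcp s t).
Proof.
elim: s t => [|x s IH] [|y t] //=; case: eqP => //= [_|/eqP //].
by rewrite !ltnS; apply: IH.
Qed.

Lemma lcp_spec (x0 : T) (s t : seq T) m :
  (forall k, k < m -> [/\ k < size s, k < size t & nth x0 s k = nth x0 t k]) ->
  (m = size s \/ m = size t \/ [/\ m < size s, m < size t & nth x0 s m != nth x0 t m]) ->
  lcp s t = m.
Proof.
elim: s t m => [|x s IH] [|y t] m /= Hk Hs.
- by case: m Hk Hs => // m /(_ 0 isT) [].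
- by case: m Hk Hs => // m /(_ 0 isT) [].
- by case: m Hk Hs => // m /(_ 0 isT) [].
case: m Hk Hs => [|m] Hk Hs.
  by case: Hs => [//|[//|[_ _ /negPf ->]]].
have [_ _ /= ->] := Hk 0 isT; rewrite eqxx; congr S; apply: IH.
  by move=> k Hkm; have [] := Hk k.+1 Hkm.
case: Hs => [[->]|[[->]|[H1 H2 H3]]]; [by left|by right; left|by right; right].
Qed.

Lemma find_eq (a : pred nat) (s : seq nat) k : k < size s -> a (nth 0 s k) ->
  (forall m, m < k -> ~~ a (nth 0 s m)) -> find a s = k.
Proof.
elim: s k => [|x s IH] k //= Hk Ha Hm.
case: k Hk Ha Hm => [|k] /= Hk Ha Hm; first by rewrite Ha.
rewrite (negPf (Hm 0 isT)); congr S; apply: IH => // m Hmk.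
exact: (Hm m.+1).
Qed.

Lemma split_drop (S : seq T) p q : p <= q ->
  drop p S = take (q - p) (drop p S) ++ drop q S.
Proof. by move=> Hpq; rewrite -{1}(cat_take_drop (q - p) (drop p S)) drop_drop subnK. Qed.

Lemma pertake (x0 : T) (S : seq T) p q d :
  (forall x, p <= x < q -> nth x0 S x = nth x0 S (x + d)) -> p <= q -> q + d <= size S ->
  take (q - p) (drop p S) = take (q - p) (drop (p + d) S).
Proof.
move=> Hper Hpq Hq; apply: (eq_from_nth (x0 := x0)).
  rewrite !size_takel ?size_drop //; lia.
move=> k; rewrite size_takel ?size_drop => [Hk'|]; last lia.
rewrite !nth_take // !nth_drop Hper; first by congr nth; lia.
lia.
Qed.

End H.
Section C.
Context {disp : Order.disp_t} {T : orderType disp}.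
Local Notation D S p := (drop p S : seqlexi T).

Lemma core (x0 : T) (S : seq T) e d :
  0 < d -> e + d + d < size S ->
  (forall x, e <= x < e + d -> nth x0 S x = nth x0 S (x + d)) ->
  (D S (e + d + d) < D S (e + d))%O ->
  (forall m, e + d < m < e + d + d -> ~~ (D S m < D S (e + d))%O) ->
  (D S (e + d) < D S e)%O /\ (forall c, e < c < e + d -> ~~ (D S c < D S e)%O).
Proof.
move=> Hd Hn Hper HB HN.
set a := e + d.
have Ee : drop e S = take d (drop a S) ++ drop a S.
  rewrite {1}(split_drop S (p:=e) (q:=a)); last lia.
  rewrite (pertake (x0:=x0) (p:=e) (q:=a) (d:=d)) //; try lia.
  by have -> : a - e = d by lia.
have Ea : drop a S = take d (drop a S) ++ drop (a + d) S.
  rewrite {1}(split_drop S (p:=a) (q:=a+d)); last lia.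
  by have -> : a + d - a = d by lia.
have G1 : (D S a < D S e)%O.
  by rewrite Ee {1}Ea ltxi_catl.
split=> // c /andP[Hc1 Hc2].
set g := a - c.
have Ec : drop c S = take g (drop c S) ++ drop a S.
  by rewrite {1}(split_drop S (p:=c) (q:=a)); last lia.
have Ecd : drop (c + d) S = take g (drop c S) ++ drop (a + d) S.
  rewrite {1}(split_drop S (p:=c+d) (q:=a+d)); last lia.
  have -> : a + d - (c + d) = g by lia.
  rewrite (pertake (x0:=x0) (p:=c) (q:=a) (d:=d)) //; try lia.
  move=> x Hx; apply: Hper; lia.
have Ea2 : drop a S = take g (drop a S) ++ drop (a + g) S.
  rewrite {1}(split_drop S (p:=a) (q:=a+g)); last lia.
  by have -> : a + g - a = g by lia.
have HNc := HN (c + d).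
have Hcd : e + d < c + d < e + d + d by lia.
move: (HNc Hcd); rewrite -leNgt Ecd.
set v := take g (drop c S).
set w := take g (drop a S).
have Hsv : size v = g by rewrite size_takel // size_drop; lia.
have Hsw : size w = g by rewrite size_takel // size_drop; lia.
case: (eqVneq w v) => [Ewv|Hwv].
  move=> H; exfalso; move: H.
  rewrite {1}Ea2 -/w Ewv leNgt ltxi_catl -leNgt => H1.
  have H2 : (D S a <= D S (a + g))%O.
    rewrite leNgt; apply: HN; lia.
  by have := lt_le_trans HB (le_trans H2 H1); rewrite ltxx.
rewrite {1}Ea2 -/w lexi_catneq ?Hsw ?Hsv // => Hwv'.
rewrite -leNgt Ee Ec -/v.
rewrite -(cat_take_drop g (take d (drop a S))) take_takel; last lia.
by rewrite -/w -catA lexi_catneq ?Hsw ?Hsv.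
Qed.
End C.
Unset Implicit Arguments.

Lemma nth_revtake {disp : Order.disp_t} {T : orderType disp} (x0 : T) (S : seq T) p k :
  p <= size S -> k < p -> nth x0 (rev (take p S)) k = nth x0 S (p - k.+1).
Proof.
move=> Hp Hk; rewrite nth_rev size_takel //; rewrite nth_take //; lia.
Qed.

Theorem lemma11 (disp : Order.disp_t) (T : orderType disp) (S : seq T) (i : nat) :
  1 <= i <= size S ->
  nss S i != (size S).+1 ->
  nss S i - i < llce S i (nss S i) ->
  llce S (i - (nss S i - i)) i = llce S i (nss S i) - (nss S i - i) /\
  nss S (i - (nss S i - i)) = i.
Proof.
move=> /andP[Hi1 Hin].
have [x0 _] : exists x0 : T, True by case: S Hin Hi1 => [|y ?] /=; [lia | exists y].
case: i Hi1 Hin => [//|a] _ Hin.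
pose P := (fun k => suf_gt S a.+1 (a.+1.+1 + k)).
pose f := find P (iota 0 (size S - a.+1)).
have Ej : nss S a.+1 = a.+2 + f by [].
rewrite Ej => Hnss Hlt.
have Hd : a.+2 + f - a.+1 = f.+1 by lia.
rewrite Hd in Hlt *.
have Hf : f < size S - a.+1.
  have := find_size P (iota 0 (size S - a.+1)); rewrite size_iota -/f; lia.
have EP : forall k, P k = (drop (a.+1 + k) S < drop a S :> seqlexi T)%O by [].
have HB : P f.
  have := @nth_find _ 0 P (iota 0 (size S - a.+1)).
  by rewrite has_find size_iota -/f nth_iota // add0n; apply.
have HN : forall k, k < f -> ~~ P k.
  move=> k Hk; have := @before_find _ 0 P (iota 0 (size S - a.+1)) k Hk.
  by rewrite nth_iota ?add0n => [->|]; last lia.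
rewrite EP in HB.
have {}HN : forall k, k < f -> ~~ (drop (a.+1 + k) S < drop a S :> seqlexi T)%O.
  by move=> k Hk; rewrite -EP; apply: HN.
set L := llce S a.+1 (a.+2 + f).
have HL1 : L <= a.+1.
  by rewrite /L /llce; have := lcp_le (rev (take a.+1 S)) (rev (take (a.+2 + f) S)); rewrite size_rev size_takel.
have Hper : forall k, k < L -> nth x0 S (a - k) = nth x0 S (a + f.+1 - k).
  move=> k Hk; have := lcp_eq x0 Hk; rewrite !nth_revtake; try lia.
  have -> : a.+1 - k.+1 = a - k by lia.
  by have -> : a.+2 + f - k.+1 = a + f.+1 - k by lia.
have Hstop : L < a.+1 -> nth x0 S (a - L) != nth x0 S (a + f.+1 - L).
  move=> HL; have := @lcp_stop _ _ x0 (rev (take a.+1 S)) (rev (take (a.+2 + f) S)).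
  rewrite -/(llce S _ _) -/L !size_rev !size_takel; try lia.
  rewrite !nth_revtake; try lia.
  have -> : a.+1 - L.+1 = a - L by lia.
  have -> : a.+2 + f - L.+1 = a + f.+1 - L by lia.
  apply; lia.
move: Hlt; rewrite -/L => Hlt.
clearbody f L; clear EP P Ej Hd.
have [e Ea] : exists e, a = e + f.+1 by exists (a - f.+1); lia.
subst a.
have Hper' : forall x, e <= x < e + f.+1 -> nth x0 S x = nth x0 S (x + f.+1).
  move=> x Hx; have := Hper (e + f.+1 - x) ltac:(lia).
  have -> : e + f.+1 - (e + f.+1 - x) = x by lia.
  by have -> : e + f.+1 + f.+1 - (e + f.+1 - x) = x + f.+1 by lia.
have HB' : (drop (e + f.+1 + f.+1) S < drop (e + f.+1) S :> seqlexi T)%O.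
  by have <- : (e + f.+1).+1 + f = e + f.+1 + f.+1 by lia.
have HN' : forall m, e + f.+1 < m < e + f.+1 + f.+1 ->
    ~~ (drop m S < drop (e + f.+1) S :> seqlexi T)%O.
  move=> m Hm; have := HN (m - (e + f.+1).+1) ltac:(lia).
  by have -> : (e + f.+1).+1 + (m - (e + f.+1).+1) = m by lia.
have [G1 G2] := core (x0:=x0) (S:=S) (e:=e) (d:=f.+1) (ltn0Sn f) ltac:(lia) Hper' HB' HN'.
have -> : (e + f.+1).+1 - f.+1 = e.+1 by lia.
split.
- rewrite /llce; apply: (lcp_spec (x0:=x0)).
  + move=> k Hk; rewrite !size_rev !size_takel; try lia.
    split; try lia.
    rewrite !nth_revtake; try lia.
    have -> : e.+1 - k.+1 = e + f.+1 - (k + f.+1) by lia.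
    have -> : (e + f.+1).+1 - k.+1 = e + f.+1 + f.+1 - (k + f.+1) by lia.
    apply: Hper; lia.
  + case: (L =P (e + f.+1).+1) => HL.
      by left; rewrite size_rev size_takel; lia.
    right; right; rewrite !size_rev !size_takel; try lia.
    split; try lia.
    rewrite !nth_revtake; try lia.
    have -> : e.+1 - (L - f.+1).+1 = e + f.+1 - L by lia.
    have -> : (e + f.+1).+1 - (L - f.+1).+1 = e + f.+1 + f.+1 - L by lia.
    apply: Hstop; lia.
- rewrite /nss (@find_eq _ _ f); first lia.
  + rewrite size_iota; lia.
  + rewrite nth_iota ?add0n; last lia.
    rewrite /suf_gt /suf /=.
    by have -> : e.+1 + f = e + f.+1 by lia.
  + move=> m Hm; rewrite nth_iota ?add0n; last lia.
    rewrite /suf_gt /suf /=; apply: G2; lia.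
Qed.
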